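(* Let $n$ be a positive integer and let $P_n$ denote the path on $n$ vertices. Then $P_n$ is super edge-graceful if and only if $n \neq 2$ and $n \neq 4$.
   Context: All graphs are simple, finite and undirected. Let $G=(V,E)$ be a graph with $p=|V|$ vertices and $q=|E|$ edges. An edge labeling $f$ is a bijection $f:E\to\{0,\pm1,\pm2,\ldots,\pm\frac{q-1}{2}\}$ if $q$ is odd, and $f:E\to\{\pm1,\pm2,\ldots,\pm\frac{q}{2}\}$ if $q$ is even. For each vertex $x\in V$, the induced vertex label is $f^*(x)=\sum_{xy\in E}f(xy)$, the sum over all edges incident with $x$. The labeling $f$ is super edge-graceful if $f^*$ is a bijection from $V$ onto $\{0,\pm1,\pm2,\ldots,\pm\frac{p-1}{2}\}$ when $p$ is odd, and onto $\{\pm1,\pm2,\ldots,\pm\frac{p}{2}\}$ when $p$ is even. A graph is super edge-graceful if it admits a super edge-graceful labeling. *)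

(* Defs.v *)
From mathcomp Require Import all_boot all_order all_algebra.
Set Implicit Arguments. Unset Strict Implicit. Unset Printing Implicit Defensive.
Import Order.TTheory GRing.Theory Num.Theory.

(* A simple graph: vertex type T (finite), adjacency relation adj
   (assumed symmetric and irreflexive where relevant).
   Edges are 2-element vertex sets {x,y} with adj x y. *)
Definition edges (T : finType) (adj : rel T) : {set {set T}} :=
  [set e : {set T} | [exists x, exists y, adj x y && (e == [set x; y])]].

Definition labset (m : nat) (z : int) : bool :=
  if odd m then (`|z| <= m./2)%N else (z != 0) && (`|z| <= m./2)%N.

Definition vlabel (T : finType) (adj : rel T) (f : {set T} -> int) (x : T) : int :=
  (\sum_(e in edges adj | x \in e) f e)%R.

Definition bij_onto (A : Type) (D : pred A) (f : A -> int) (S : int -> bool) : Prop :=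
  {in D &, injective f} /\ {in D, forall a, S (f a)} /\
  (forall z, S z -> exists2 a, D a & f a = z).

Definition super_edge_graceful (T : finType) (adj : rel T) : Prop :=
  exists f : {set T} -> int,
    bij_onto (mem (edges adj)) f (labset #|edges adj|) /\
    bij_onto (mem [pred x : T | true]) (vlabel adj f) (labset #|T|).

Definition path_adj (n : nat) : rel 'I_n :=
  fun i j => (i.+1 == j :> nat) || (j.+1 == i :> nat).
Arguments path_adj n : clear implicits.

(* Main.v *)
Require Import Defs.
From mathcomp Require Import all_boot all_order all_algebra zify.
Set Implicit Arguments. Unset Strict Implicit. Unset Printing Implicit Defensive.
Import Order.TTheory GRing.Theory Num.Theory.

Module Helpers.

Definition ed (n i : nat) : {set 'I_n} := [set x : 'I_n | (val x == i) || (val x == i.+1)].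

Lemma ed_inj n i j : i < n.-1 -> j < n.-1 -> ed n i = ed n j -> i = j.
Proof.
move=> hi hj e.
have hi' : i < n by lia.
have hj' : j < n by lia.
have : Ordinal hi' \in ed n j by rewrite -e inE eqxx.
have : Ordinal hj' \in ed n i by rewrite e inE eqxx.
rewrite !inE /= => h1 h2. lia.
Qed.

Lemma edgesE n : edges (path_adj n) = [set ed n (val i) | i : 'I_n.-1].
Proof.
apply/setP => e; rewrite inE; apply/existsP/imsetP.
- case=> x /existsP [y /andP [hxy /eqP ->]].
  move: hxy; rewrite /path_adj => /orP [] /eqP h.
  + have hx : x < n.-1 by move: (ltn_ord y); lia.
    exists (Ordinal hx) => //; apply/setP => z; rewrite !inE /= -!val_eqE /= -h; lia.
  + have hy : y < n.-1 by move: (ltn_ord x); lia.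
    exists (Ordinal hy) => //; apply/setP => z; rewrite !inE /= -!val_eqE /= -h; lia.
- case=> i _ ->.
  have h1 : i < n by move: (ltn_ord i); lia.
  have h2 : i.+1 < n by move: (ltn_ord i); lia.
  exists (Ordinal h1); apply/existsP; exists (Ordinal h2).
  rewrite /path_adj /= eqxx /=; apply/eqP/setP => z; rewrite !inE -!val_eqE /=; lia.
Qed.

Lemma card_edges n : #|edges (path_adj n)| = n.-1.
Proof.
rewrite edgesE card_imset ?card_ord //.
move=> i j /ed_inj h; apply/val_inj/h; exact: ltn_ord.
Qed.

Definition idx n (e : {set 'I_n}) : nat := (\sum_(x in e) val x)./2.

Lemma idx_ed n i : i.+1 < n -> idx (ed n i) = i.
Proof.
move=> h.
have h1 : i < n by lia.
have -> : ed n i = [set Ordinal h1; Ordinal h]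
  by apply/setP => z; rewrite !inE -!val_eqE.
rewrite /idx big_setU1 ?big_set1 /=; last by rewrite inE -val_eqE /=; lia.
lia.
Qed.
Local Open Scope ring_scope.

Definition wv (g : nat -> int) (n x : nat) : int :=
  (if (x < n.-1)%N then g x else 0) + (if (0 < x)%N then g x.-1 else 0).

Lemma sum_if1 N a (F : nat -> int) :
  \sum_(i < N) (if a == val i then F i else 0) = if (a < N)%N then F a else 0.
Proof.
elim: N => [|N IH]; first by rewrite big_ord0.
rewrite big_ord_recr /= IH.
case: eqP => [->|h]; first by rewrite ltnn ltnSn add0r.
rewrite addr0; have -> : (a < N.+1)%N = (a < N)%N by lia. by [].
Qed.

Lemma sum_if1' N a (F : nat -> int) :
  \sum_(i in 'I_N) (if a == val i then F i else 0) = if (a < N)%N then F a else 0.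
Proof. by rewrite -sum_if1; apply: eq_bigl. Qed.

Lemma vlabelE n (f : {set 'I_n} -> int) (x : 'I_n) :
  vlabel (path_adj n) f x = wv (fun i => f (ed n i)) n x.
Proof.
rewrite /vlabel edgesE big_mkcondr big_imset /=; last first.
  move=> i j _ _ /ed_inj h; apply/val_inj/h; exact: ltn_ord.
rewrite (eq_bigr (fun i : 'I_n.-1 => (if val x == val i then f (ed n i) else 0)
     + (if (val x).-1 == val i then (if (0 < val x)%N then f (ed n i) else 0) else 0))); last first.
  move=> i _; rewrite inE.
repeat case: ifP => /= ?; rewrite ?addr0 ?add0r //; lia.
rewrite big_split /= (sum_if1' _ _ (fun i => f (ed n i))).
rewrite (eq_bigr (fun i : 'I_n.-1 => if (val x).-1 == val i then
     (if (0 < val x)%N then f (ed n (val x).-1) else 0) else 0)); last first.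
  by move=> i _; case: eqP => // ->.
rewrite (sum_if1' _ _ (fun _ => if (0 < val x)%N then f (ed n (val x).-1) else 0)) /wv.
congr (_ + _).
case: x => x hx /=; repeat case: ifP => //; move=> *; lia.
Qed.
Local Open Scope ring_scope.

Lemma count_surj N (S : int -> bool) (L : seq int) (h : nat -> int) :
  uniq L -> size L = N -> (forall z, (z \in L) = S z) ->
  (forall i j, (i < N)%N -> (j < N)%N -> h i = h j -> i = j) ->
  (forall i, (i < N)%N -> S (h i)) ->
  forall z, S z -> exists2 i, (i < N)%N & h i = z.
Proof.
move=> uL sL mL hinj hS z Sz.
have u1 : uniq (map h (iota 0 N)).
  rewrite map_inj_in_uniq ?iota_uniq // => i j; rewrite !mem_iota /= !add0n; exact: hinj.
have sub : {subset map h (iota 0 N) <= L}.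
  by move=> y /mapP [i]; rewrite mem_iota add0n /= => hi ->; rewrite mL hS.
have sz : (size L <= size (map h (iota 0 N)))%N by rewrite size_map size_iota sL.
have [_ eq] := uniq_min_size u1 sub sz.
have : z \in map h (iota 0 N) by rewrite eq mL.
by case/mapP => i; rewrite mem_iota add0n /= => hi ->; exists i.
Qed.

Lemma mem_shift (h m : nat) (z : int) :
  (z \in map (fun i : nat => i%:Z - h%:Z) (iota 0 m)) = ((- h%:Z <= z) && (z < m%:Z - h%:Z)).
Proof.
apply/mapP/idP.
- by case=> i; rewrite mem_iota add0n /= => hi ->; apply/andP; split; lia.
- move=> /andP [h1 h2]; exists (absz (z + h%:Z)); first by rewrite mem_iota add0n /=; lia.
  lia.
Qed.

Lemma labset_list m : exists L : seq int, [/\ uniq L, size L = m & forall z, (z \in L) = labset m z].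
Proof.
set h := m./2.
case o: (odd m).
- exists (map (fun i : nat => i%:Z - h%:Z) (iota 0 m)); split.
  + rewrite map_inj_in_uniq ?iota_uniq // => i j _ _ /eqP; rewrite subr_eq subrK; move/eqP; lia.
  + by rewrite size_map size_iota.
  + move=> z; rewrite mem_shift /labset o /h.
    apply/idP/idP; [move=> /andP [? ?]|move=> ?; apply/andP; split]; lia.
- exists (map (fun i : nat => i%:Z - h%:Z) (iota 0 h) ++ map (fun i : nat => (i.+1)%:Z) (iota 0 h)); split.
  + rewrite cat_uniq; apply/and3P; split.
    * rewrite map_inj_in_uniq ?iota_uniq // => i j _ _ /eqP; rewrite subr_eq subrK; move/eqP; lia.
    * apply/hasPn => y /mapP [i]; rewrite mem_iota => hi ->; rewrite mem_shift; lia.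
    * rewrite map_inj_in_uniq ?iota_uniq // => i j _ _ ; lia.
  + rewrite size_cat !size_map !size_iota /h; lia.
  + move=> z; rewrite mem_cat mem_shift /labset o /h.
    apply/idP/idP.
    * case/orP; first by move=> /andP [? ?]; lia.
      case/mapP => i; rewrite mem_iota => hi ->; lia.
    * move=> /andP [hz hb].
      case: (ltrP z 0) => hz0.
        by apply/orP; left; apply/andP; split; lia.
      apply/orP; right; apply/mapP; exists (absz z).-1; first by rewrite mem_iota; lia.
      lia.
Qed.
Local Open Scope ring_scope.

Lemma wv_ext g1 g2 n x : (forall i, (i < n.-1)%N -> g1 i = g2 i) -> (x < n)%N ->
  wv g1 n x = wv g2 n x.
Proof.
move=> e hx; rewrite /wv; congr (_ + _); case: ifP => h //; apply: e; lia.
Qed.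

Lemma construct n (g : nat -> int) :
  (forall i j, (i < n.-1)%N -> (j < n.-1)%N -> g i = g j -> i = j) ->
  (forall i, (i < n.-1)%N -> labset n.-1 (g i)) ->
  (forall i j, (i < n)%N -> (j < n)%N -> wv g n i = wv g n j -> i = j) ->
  (forall i, (i < n)%N -> labset n (wv g n i)) -> super_edge_graceful (path_adj n).
Proof.
move=> gi gl wi wl.
have fe : forall i, (i < n.-1)%N -> g (idx (ed n i)) = g i.
  by move=> i hi; rewrite idx_ed //; lia.
have vl : forall x : 'I_n, vlabel (path_adj n) (fun e => g (idx e)) x = wv g n x.
  move=> x; rewrite vlabelE; apply: wv_ext => //; exact: fe.
exists (fun e => g (idx e)); rewrite card_edges; split; split.
- move=> e1 e2; rewrite edgesE => /imsetP [i _ ->] /imsetP [j _ ->].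
  rewrite !fe ?ltn_ord // => /gi h; congr (ed n _); apply: h; exact: ltn_ord.
- split.
  + move=> e; rewrite edgesE => /imsetP [i _ ->]; rewrite fe ?ltn_ord //; apply: gl; exact: ltn_ord.
  + move=> z hz; have [L [uL sL mL]] := labset_list n.-1.
    have [i hi <-] := count_surj uL sL mL gi gl hz.
    exists (ed n i); last exact: fe.
    by rewrite edgesE; apply/imsetP; exists (Ordinal hi).
- move=> x y _ _; rewrite !vl => /wi h; apply/val_inj/h; exact: ltn_ord.
- split.
  + by move=> x _; rewrite vl card_ord; apply: wl.
  + move=> z hz; have [L [uL sL mL]] := labset_list n.
    rewrite card_ord in hz *.
    have [i hi <-] := count_surj uL sL mL wi wl hz.
    by exists (Ordinal hi); rewrite // vl.
Qed.

Lemma extract n : super_edge_graceful (path_adj n) -> exists g : nat -> int,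
  [/\ (forall i j, (i < n.-1)%N -> (j < n.-1)%N -> g i = g j -> i = j),
      (forall i, (i < n.-1)%N -> labset n.-1 (g i)),
      (forall i j, (i < n)%N -> (j < n)%N -> wv g n i = wv g n j -> i = j) &
      (forall i, (i < n)%N -> labset n (wv g n i))].
Proof.
case=> f [[fi [fl _]] [vi [vli _]]].
rewrite card_edges in fl.
have ein : forall i, (i < n.-1)%N -> ed n i \in edges (path_adj n).
  by move=> i hi; rewrite edgesE; apply/imsetP; exists (Ordinal hi).
exists (fun i => f (ed n i)); split.
- move=> i j hi hj e; apply: (ed_inj hi hj); apply: (fi _ _ (ein _ hi) (ein _ hj) e).
- by move=> i hi; apply: fl; apply: ein.
- move=> i j hi hj.
  rewrite -[i]/(val (Ordinal hi)) -[j]/(val (Ordinal hj)) -!vlabelE.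
  move=> e; have := vi (Ordinal hi) (Ordinal hj) isT isT e; by move/(congr1 val).
- move=> i hi; rewrite -[i]/(val (Ordinal hi)) -vlabelE.
  have := vli (Ordinal hi) isT; by rewrite card_ord.
Qed.
Local Open Scope ring_scope.

Ltac crush := rewrite ?/labset; repeat (case: ifP => /= ?); try lia.

Definition gA (k i : nat) : int := if odd i then (i./2).+1%:Z else (i./2)%:Z - k%:Z.

Lemma wA k i : (i < (k.*2).+1)%N -> wv (gA k) (k.*2).+1 i = i%:Z - k%:Z.
Proof. move=> hi; rewrite /wv /gA /=. crush. Qed.

Lemma caseA k : super_edge_graceful (path_adj (k.*2).+1).
Proof.
apply: (@construct _ (gA k)).
- move=> i j hi hj; rewrite /gA; crush.
- move=> i hi; rewrite /gA; crush.
- move=> i j hi hj; rewrite !wA //; lia.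
- move=> i hi; rewrite wA //; crush.
Qed.

Definition gB (m i : nat) : int :=
  if (i <= m.*2)%N then (if odd i then (i./2)%:Z - (m.*2)%:Z else (i./2)%:Z - 1)
  else if i == (m.*2).+1 then m%:Z
  else if odd i then (i./2)%:Z - ((m.*2).+1)%:Z else (i./2)%:Z.

Definition wB (m i : nat) : int :=
  if i == 0%N then -1 else if (i <= m.*2)%N then i%:Z - ((m.*2).+2)%:Z
  else if i == (m.*2).+1 then (m.*2)%:Z - 1
  else if i == (m.*2).+2 then ((m.*2).+1)%:Z
  else if (i <= 4 * m)%N then i%:Z - ((m.*2).+2)%:Z else (m.*2)%:Z.

Lemma wBE m i : (0 < m)%N -> (i < ((m.*2).+1).*2)%N -> wv (gB m) ((m.*2).+1).*2 i = wB m i.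
Proof. move=> hm hi; rewrite /wv /gB /wB /=. crush. Qed.

Lemma caseB m : (0 < m)%N -> super_edge_graceful (path_adj ((m.*2).+1).*2).
Proof.
move=> hm; apply: (@construct _ (gB m)).
- move=> i j hi hj; rewrite /gB; crush.
- move=> i hi; rewrite /gB; crush.
- move=> i j hi hj; rewrite !wBE // /wB; crush.
- move=> i hi; rewrite wBE // /wB; crush.
Qed.

Definition gC (m i : nat) : int :=
  if (i <= m.*2 - 2)%N then (if odd i then (i./2)%:Z - (m.*2 - 1)%:Z else (i./2)%:Z - 1)
  else if i == (m.*2 - 1)%N then m%:Z
  else if i == m.*2 then m%:Z - 1
  else if odd i then (i./2)%:Z + 1 else (i./2)%:Z - ((m.*2).+1)%:Z.

Definition wC (m i : nat) : int :=
  if i == 0%N then -1 else if (i <= m.*2 - 2)%N then i%:Z - ((m.*2).+1)%:Z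
  else if i == (m.*2 - 1)%N then (m.*2)%:Z - 2
  else if i == m.*2 then (m.*2)%:Z - 1
  else if i == (m.*2).+1 then (m.*2)%:Z
  else if (i <= 4 * m - 2)%N then i%:Z - ((m.*2).+1)%:Z else -2.

Lemma wCE m i : (1 < m)%N -> (i < 4 * m)%N -> wv (gC m) (4 * m) i = wC m i.
Proof. move=> hm hi; rewrite /wv /gC /wC /=. crush. Qed.

Lemma caseC m : (1 < m)%N -> super_edge_graceful (path_adj (4 * m)).
Proof.
move=> hm; apply: (@construct _ (gC m)).
- move=> i j hi hj; rewrite /gC; crush.
- move=> i hi; rewrite /gC; crush.
- move=> i j hi hj; rewrite !wCE // /wC; crush.
- move=> i hi; rewrite wCE // /wC; crush.
Qed.

Lemma no2 : ~ super_edge_graceful (path_adj 2).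
Proof.
move/extract => [g [_ gl wi _]].
have := gl 0%N isT; have := wi 0%N 1%N isT isT; rewrite /wv /labset /=; lia.
Qed.

Lemma no4 : ~ super_edge_graceful (path_adj 4).
Proof.
move/extract => [g [gi gl wi wl]].
have := gl 0%N isT; have := gl 1%N isT; have := gl 2%N isT.
have := wl 0%N isT; have := wl 3%N isT.
have := wi 0%N 1%N isT isT; have := gi 0%N 1%N isT isT; have := gi 0%N 2%N isT isT;
have := gi 1%N 2%N isT isT.
rewrite /wv /labset /=; lia.
Qed.
End Helpers.
Import Helpers.


Theorem theorem1 (n : nat) : (0 < n)%N ->
  (super_edge_graceful (path_adj n) <-> (n != 2%N) /\ (n != 4%N)).
Proof.
move=> hn; split.
- move=> h; split; apply/eqP => e; subst n; [exact: no2 h | exact: no4 h].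
- case=> h2 h4.
  case o: (odd n).
    have -> : n = (n./2).*2.+1 by lia.
    exact: caseA.
  case o2: (odd n./2).
    have -> : n = (((n./2)./2).*2.+1).*2 by lia.
    apply: caseB; lia.
  have -> : n = 4 * (n./2)./2 by lia.
  apply: caseC; lia.
Qed.
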